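(* For every $m\ge2$, the weight-$m$ part of the first Lie algebra homology of $\Lambda_1(\mathbb{Q}\mathrm{Tree}_2)$ is nonzero: $H_1(\Lambda_1(\mathbb{Q}\mathrm{Tree}_2))_{(m)}\neq0$. Equivalently, $\mathbb{Q}\mathrm{Tree}_2((m+1))$ is not contained in the derived subalgebra $[\Lambda_1(\mathbb{Q}\mathrm{Tree}_2),\Lambda_1(\mathbb{Q}\mathrm{Tree}_2)]$.
   Context: $\mathrm{Tree}_2((m))$, $m\ge1$, is the set of planar binary rooted trees with one root and $m$ leaves labeled $1,\dots,m$ from left to right (each internal vertex has exactly two inputs), equivalently full parenthesizations of $12\cdots m$; $\mathrm{Tree}_2((1))=\{1\}$. Composition $S\circ_iT$ grafts the root of $T$ onto the $i$-th leaf of $S$. Let $\Lambda_1(\mathbb{Q}\mathrm{Tree}_2)=\bigoplus_{m\ge2}\mathbb{Q}\mathrm{Tree}_2((m))$ with Lie bracket $[c,d]=\sum_{t=1}^{j}d\circ_tc-\sum_{s=1}^{k}c\circ_sd$ for $c\in\mathrm{Tree}_2((k))$, $d\in\mathrm{Tree}_2((j))$, extended bilinearly. Give $\mathbb{Q}\mathrm{Tree}_2((m))$ weight $m-1$ (the eigenvalue of the adjoint action of the unit tree); the Chevalley–Eilenberg chain complex decomposes by total weight, and $H_1(\cdot)_{(m)}$ denotes the weight-$m$ part of $H_1$, i.e. of the abelianization $\Lambda_1/[\Lambda_1,\Lambda_1]$. *)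

(* Defs.v *)
From HB Require Import structures.
From mathcomp Require Import all_boot all_order all_algebra.
Set Implicit Arguments. Unset Strict Implicit. Unset Printing Implicit Defensive.
Import Order.TTheory GRing.Theory Num.Theory.
Local Open Scope ring_scope.

(* Planar binary rooted trees; leaves are labeled 1..m left to right
   implicitly by their position. *)
Inductive tree : Type := Leaf | Node of tree & tree.

Fixpoint tree_eqb (s t : tree) : bool :=
  match s, t with
  | Leaf, Leaf => true
  | Node s1 s2, Node t1 t2 => tree_eqb s1 t1 && tree_eqb s2 t2
  | _, _ => false
  end.

Lemma tree_eqP : Equality.axiom tree_eqb.
Proof.
elim=> [|s1 IH1 s2 IH2] [|t1 t2] /=; try by constructor.
case: (IH1 t1) => [->|ne]; last by constructor; case.
case: (IH2 t2) => [->|ne]; last by constructor; case.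
by constructor.
Qed.

HB.instance Definition _ := hasDecEq.Build tree tree_eqP.

Fixpoint nleaves (t : tree) : nat :=
  match t with Leaf => 1%N | Node l r => (nleaves l + nleaves r)%N end.

(* graft S i T : grafts the root of T onto the leaf of S at 0-based
   position i; so  S \circ_i T  (1-based i) is  graft S (i-1) T. *)
Fixpoint graft (S : tree) (i : nat) (T : tree) : tree :=
  match S with
  | Leaf => if i == 0%N then T else Leaf
  | Node l r => if (i < nleaves l)%N then Node (graft l i T) r
                else Node l (graft r (i - nleaves l) T)
  end.

Definition comp (S : tree) (i : nat) (T : tree) : tree := graft S i.-1 T.

(* Formal Q-linear combinations of trees. *)
Definition fsum := seq (rat * tree).

Definition coef (v : fsum) (t : tree) : rat :=
  \sum_(p <- v) (if p.2 == t then p.1 else 0).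

(* v lies in Lambda_1(Q Tree_2) = (+)_{m>=2} Q Tree_2((m)) *)
Definition in_Lambda1 (v : fsum) : bool := all (fun p => 2 <= nleaves p.2)%N v.

Definition bracket_tree (c d : tree) : fsum :=
  [seq (1, comp d t c) | t <- iota 1 (nleaves d)] ++
  [seq (-1, comp c s d) | s <- iota 1 (nleaves c)].

Definition bracket (x y : fsum) : fsum :=
  flatten [seq flatten [seq [seq (p.1 * q.1 * e.1, e.2) | e <- bracket_tree p.2 q.2]
                        | q <- y] | p <- x].

Definition in_derived (v : fsum) : Prop :=
  exists xs : seq (fsum * fsum),
    all (fun xy => in_Lambda1 xy.1 && in_Lambda1 xy.2) xs /\
    forall t, coef v t = coef (flatten [seq bracket xy.1 xy.2 | xy <- xs]) t.

(* Main.v *)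
Require Import Defs.
From mathcomp Require Import all_boot all_order all_algebra.
From mathcomp Require Import zify.
Import GRing.Theory.


Fixpoint isR (t : tree) : bool :=
  match t with Leaf => true | Node l r => (l == Leaf) && isR r end.

Fixpoint comb (n : nat) : tree :=
  match n with 0 => Leaf | n.+1 => Node Leaf (comb n) end.

Lemma nleaves_gt0 t : (0 < nleaves t)%N.
Proof. elim: t => //= l IHl r _; by rewrite addn_gt0 IHl. Qed.

Lemma nleaves_graft d i c : (i < nleaves d)%N ->
  nleaves (graft d i c) = (nleaves d + nleaves c).-1.
Proof.
elim: d i => [|l IHl r IHr] i /=.
  by case: i => //= _; rewrite add1n.
move=> Hi; case: ifP => Hl /=.
  have := nleaves_gt0 l; have := nleaves_gt0 r; have := nleaves_gt0 c => ? ? ?.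
  rewrite IHl //; lia.
have := nleaves_gt0 l; have := nleaves_gt0 r; have := nleaves_gt0 c => ? ? ?.
rewrite IHr; last by move/negbT: Hl; rewrite -leqNgt => ?; lia.
move/negbT: Hl; rewrite -leqNgt => ?. lia.
Qed.

Lemma isR_graft d c i : (1 < nleaves c)%N -> (i < nleaves d)%N ->
  isR (graft d i c) = [&& isR d, isR c & i == (nleaves d).-1].
Proof.
move=> Hc; elim: d i => [|l IHl r IHr] i /=.
  by case: i => //= _; rewrite andbT.
move=> Hi; have := nleaves_gt0 l; have := nleaves_gt0 r => Hr Hl0.
case: ifP => Hl /=.
  have -> : (graft l i c == Leaf) = false.
    apply/negbTE; apply/eqP => E; have := (@nleaves_graft l i c Hl); rewrite E /=.
    lia.
  case: (l =P Leaf) => [El|] //=; subst l; move: Hl => /= Hl.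
  have -> : (i == (1 + nleaves r).-1)%N = false by apply/negbTE; lia.
  by rewrite !andbF.
move/negbT: Hl; rewrite -leqNgt => Hl.
rewrite IHr; last by lia.
case: (l == Leaf) => //=.
have -> : (i - nleaves l == (nleaves r).-1)%N = (i == (nleaves l + nleaves r).-1)%N
  by apply/idP/idP => /eqP ?; apply/eqP; lia.
by [].
Qed.

Local Open Scope ring_scope.

Lemma eq_comb t n : (t == comb n) = isR t && (nleaves t == n.+1).
Proof.
elim: t n => [|l IHl r IHr] [|n] //=.
- have ->: (Node l r == Leaf) = false by [].
  have := nleaves_gt0 l; have := nleaves_gt0 r => ? ?.
  by symmetry; apply/negbTE; apply/negP => /andP[_ /eqP]; lia.
- case: (l =P Leaf) => [->|Hl] /=.
    have -> : (Node Leaf r == Node Leaf (comb n)) = (r == comb n) by [].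
    by rewrite IHr add1n eqSS.
  by apply/negbTE; apply/eqP => [[]] /Hl.
Qed.

Lemma coef_cat a b t : coef (a ++ b) t = coef a t + coef b t.
Proof. by rewrite /coef big_cat. Qed.

Lemma coef_flatten ss t : coef (flatten ss) t = \sum_(s <- ss) coef s t.
Proof.
elim: ss => [|s ss IH] /=; first by rewrite big_nil /coef big_nil.
by rewrite big_cons coef_cat IH.
Qed.

Lemma coef_scale a s t : coef [seq (a * e.1, e.2) | e <- s] t = a * coef s t.
Proof.
rewrite /coef big_map mulr_sumr; apply: eq_bigr => e _ /=.
by case: ifP; rewrite ?mulr0.
Qed.

Lemma sum_comb m d c : (1 < nleaves c)%N ->
  \sum_(t <- iota 1%N (nleaves d)) (if Defs.comp d t c == comb m then 1 else 0 : rat)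
  = if [&& isR d, isR c & nleaves d + nleaves c == m.+2]%N then 1 else 0.
Proof.
move=> Hc; have := nleaves_gt0 d.
case E: (nleaves d) => [|j] // _.
have -> : iota 1 j.+1 = iota 1 j ++ iota (1 + j) 1 by rewrite -iotaD addn1.
rewrite big_cat /= big_seq1 big_seq big1 ?add0r.
  rewrite /Defs.comp eq_comb isR_graft ?E //= nleaves_graft ?E //.
  rewrite add0n eqxx /= andbT.
  by case: (isR d); case: (isR c) => //=; rewrite addSn eqSS.
move=> t; rewrite mem_iota => /andP [H1 H2].
rewrite /Defs.comp eq_comb isR_graft ?E //; last by lia.
have -> : (t.-1 == j.+1.-1)%N = false by apply/negbTE; lia.
by rewrite !andbF.
Qed.

Lemma coef_bt m c d : (1 < nleaves c)%N -> (1 < nleaves d)%N ->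
  coef (bracket_tree c d) (comb m) = 0.
Proof.
move=> Hc Hd; rewrite /bracket_tree coef_cat /coef !big_map /=.
rewrite [X in _ + X](eq_bigr (fun t => - (if Defs.comp c t d == comb m then 1 else 0 : rat))); last first.
  by move=> t _; case: ifP => _; rewrite ?oppr0.
rewrite sumrN (@sum_comb m d c Hc) (@sum_comb m c d Hd) addnC.
by case: (isR c); case: (isR d); rewrite /= ?subrr ?oppr0 ?addr0.
Qed.

Lemma coef_bracket m x y : in_Lambda1 x -> in_Lambda1 y ->
  coef (bracket x y) (comb m) = 0.
Proof.
move=> Hx Hy; rewrite /bracket coef_flatten big_map big_seq big1 // => p Hp.
rewrite coef_flatten big_map big_seq big1 // => q Hq.
rewrite coef_scale coef_bt ?mulr0 //.
- by move/allP: Hx => /(_ p Hp).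
- by move/allP: Hy => /(_ q Hq).
Qed.

Theorem lemma5p2 (m : nat) (hm : (2 <= m)%N) :
  exists v : fsum,
    all (fun p => nleaves p.2 == m.+1) v /\ ~ in_derived v.
Proof.
exists [:: (1, comb m)]; split.
  rewrite /= andbT; apply/eqP; elim: m {hm} => //= n ->; by rewrite add1n.
move=> [xs [Hall /(_ (comb m))]].
rewrite coef_flatten big_map big_seq big1.
  by rewrite /coef big_seq1 eqxx.
move=> xy Hxy; move/allP: Hall => /(_ xy Hxy) /andP [H1 H2].
exact: coef_bracket.
Qed.
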